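(* Let $n\geq 1$ and let $L$ be a Lie subalgebra of $\mathbb{W}_n$ with $\mathrm{GKdim}(L) = n$. Then $\dim_\Bbbk(L_{2,0}) = \infty$.
   Context: $\Bbbk$ is a field of characteristic zero, $\mathbb{W}_n = \sum_{k=1}^n \Bbbk[x_1,\dots,x_n]\partial_k$, $\partial_k = \partial/\partial x_k$. For a subalgebra $L$, $L_{2,0} = L \cap x_1^2\mathbb{W}_n = L\cap \sum_{k=1}^n x_1^2\Bbbk[x_1,\dots,x_n]\partial_k$. $\mathrm{GKdim}$ denotes Gelfand--Kirillov dimension of a Lie algebra: the supremum over finite-dimensional subspaces $V$ of the growth rate $\limsup_k \log\dim(V + C_1(V)+\dots+C_k(V))/\log k$, where $C_0(V)=V$ and $C_k(V) = [C_{k-1}(V),V]$. *)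

(* Defs.v *)
From HB Require Import structures.
From mathcomp Require Import all_boot all_order all_algebra.
From mathcomp Require Import all_classical all_reals all_analysis.
From mathcomp Require mpoly.
Import -(notations) mpoly.
From Stdlib Require Rdefinitions.
From mathcomp Require Import Rstruct.

Set Implicit Arguments.
Unset Strict Implicit.
Unset Printing Implicit Defensive.

Import Order.TTheory GRing.Theory Num.Theory.
Local Open Scope ring_scope.
Local Open Scope classical_set_scope.

(* Polynomial ring k[x_1..x_n] (indices 0..n-1). *)
Notation Pol K n := (mpoly.mpoly n K).

(* W_n = sum_k k[x_1..x_n] d_k : a vector field is the tuple of its
   coefficients (f_k)_k, standing for sum_k f_k d_k. *)
Notation Wn K n := ({ffun 'I_n -> Pol K n}).

Definition var (K : fieldType) (n : nat) (i : 'I_n) : Pol K n :=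
  mpoly.mpolyX K (mpoly.mnm1 i).

Definition pderiv (K : fieldType) (n : nat) (i : 'I_n) (p : Pol K n) : Pol K n :=
  mpoly.mderiv i p.

(* Lie bracket of vector fields:
   [sum_i f_i d_i, sum_i g_i d_i] = sum_k (sum_i (f_i d_i g_k - g_i d_i f_k)) d_k *)
Definition lie (K : fieldType) (n : nat) (f g : Wn K n) : Wn K n :=
  [ffun k => \sum_(i < n) (f i * pderiv i (g k) - g i * pderiv i (f k))].

Definition is_Lie_subalgebra (K : fieldType) (n : nat) (L : set (Wn K n)) : Prop :=
  [/\ L 0,
      (forall u v, L u -> L v -> L (u + v)),
      (forall (a : K) u, L u -> L (a *: u)) &
      (forall u v, L u -> L v -> L (lie u v))].

Definition span (K : fieldType) (V : lmodType K) (S : set V) : set V :=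
  [set v | exists (m : nat) (c : 'I_m -> K) (w : 'I_m -> V),
      (forall i, S (w i)) /\ v = \sum_(i < m) c i *: w i].

Definition lin_indep (K : fieldType) (V : lmodType K) (m : nat) (w : 'I_m -> V) : Prop :=
  forall c : 'I_m -> K, \sum_(i < m) c i *: w i = 0 -> forall i, c i = 0.

Definition dimE (K : fieldType) (V : lmodType K) (S : set V) : \bar Rdefinitions.R :=
  ereal_sup [set (m%:R)%:E | m in [set m : nat | exists w : 'I_m -> V,
                                     (forall i, S (w i)) /\ lin_indep w]].

(* C_0(V) = V, C_k(V) = [C_{k-1}(V), V], for V the span of the finite list s. *)
Fixpoint Cpow (K : fieldType) (n : nat) (s : seq (Wn K n)) (k : nat) : set (Wn K n) :=
  match k with
  | 0 => span [set v | v \in s]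
  | k'.+1 => span [set lie a b | a in Cpow s k' & b in span [set v | v \in s]]
  end.

Definition Csum (K : fieldType) (n : nat) (s : seq (Wn K n)) (k : nat) : set (Wn K n) :=
  span (\bigcup_(j in [set j : nat | (j <= k)%N]) Cpow s j).

(* limsup_k log dim(V + C_1(V) + ... + C_k(V)) / log k
   (the dimensions involved are always finite). *)
Definition growth (K : fieldType) (n : nat) (s : seq (Wn K n)) : \bar Rdefinitions.R :=
  limn_esup (fun k : nat =>
    ((ln (fine (dimE (Csum s k))) / ln (k%:R : Rdefinitions.R)))%:E).

(* Gelfand-Kirillov dimension of a Lie subalgebra L: supremum over the
   finite-dimensional subspaces V of L (= spans of finite lists in L). *)
Definition GKdim (K : fieldType) (n : nat) (L : set (Wn K n)) : \bar Rdefinitions.R :=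
  ereal_sup [set growth s | s in [set s : seq (Wn K n) | forall v, v \in s -> L v]].

(* L_{2,0} = L ∩ x_1^2 W_n, x_1 being the variable of index i1. *)
Definition L20 (K : fieldType) (n : nat) (i1 : 'I_n) (L : set (Wn K n)) : set (Wn K n) :=
  [set v | L v /\ forall k, exists g : Pol K n, v k = var K i1 ^+ 2 * g].

(* Main.v *)
Require Import Defs.
From HB Require Import structures.
From mathcomp Require Import all_boot all_order all_algebra.
From mathcomp Require Import all_classical all_reals all_analysis.
From mathcomp Require mpoly.
Import -(notations) mpoly.
From mathcomp Require Import Rstruct.
From mathcomp Require Import zify lra.
Unset Implicit Arguments.
Unset Strict Implicit.
Unset Printing Implicit Defensive.
Import Order.TTheory GRing.Theory Num.Theory.
Local Open Scope ring_scope.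

Section Bnd.
Context {K : fieldType} {n : nat}.

Definition bnd (D : nat) (p : Pol K n) := forall m : multinom n, (D <= mdeg m)%N -> mcoeff m p = 0.

Lemma bnd0 D : bnd D 0. Proof. by move=> m _; rewrite mcoeff0. Qed.
Lemma bndD D p q : bnd D p -> bnd D q -> bnd D (p + q).
Proof. by move=> hp hq m hm; rewrite mcoeffD hp // hq // addr0. Qed.
Lemma bndN D p : bnd D p -> bnd D (- p).
Proof. by move=> hp m hm; rewrite mcoeffN hp // oppr0. Qed.
Lemma bndZ D c p : bnd D p -> bnd D (c *: p).
Proof. by move=> hp m hm; rewrite mcoeffZ hp // mulr0. Qed.
Lemma bndW D E p : (D <= E)%N -> bnd D p -> bnd E p.
Proof. by move=> hDE hp m hm; apply: hp; apply: leq_trans hm. Qed.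
Lemma bndM a b p q : bnd a p -> bnd b q -> bnd (a + b) (p * q).
Proof.
move=> hp hq m hm; rewrite mcoeffM big1 // => k /eqP hk.
have : (a + b <= mdeg k.1 + mdeg k.2)%N by rewrite -mdegD -hk.
case: (leqP a (mdeg k.1)) => h1; first by rewrite hp ?mul0r.
case: (leqP b (mdeg k.2)) => h2; first by rewrite hq ?mulr0.
move=> h; exfalso; move: h; rewrite leqNgt => /negP; apply.
by rewrite -addnS; apply: leq_add => //; apply: ltnW.
Qed.
Lemma bnd_deriv D i p : bnd D p -> bnd D (pderiv i p).
Proof.
move=> hp m hm; rewrite /pderiv mcoeff_mderiv hp ?mul0rn //.
by rewrite mdegD mdeg1 addn1 ltnW.
Qed.
Lemma bnd_sum D m (F : 'I_m -> Pol K n) : (forall i, bnd D (F i)) -> bnd D (\sum_(i < m) F i).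
Proof. move=> h; apply: (big_ind (bnd D)) => //; [exact: bnd0|exact: bndD]. Qed.
End Bnd.
Definition bndV {K : fieldType} {n : nat} D (v : Wn K n) := forall k, bnd D (v k).

Section Vf.
Context {K : fieldType} {n : nat}.
Implicit Types (u v : Wn K n) (L S : set (Wn K n)).

Lemma bnd_poly_ex (p : Pol K n) : bnd (\max_(m <- msupp p) (mdeg m).+1) p.
Proof.
move=> m hm; apply/eqP; rewrite mcoeff_eq0; apply/negP => hin.
have : ((mdeg m).+1 <= \max_(m <- msupp p) (mdeg m).+1)%N.
  by rewrite (big_rem m) //= leq_maxl.
by rewrite ltnNge hm.
Qed.

Lemma bndV_ex v : exists D, bndV D v.
Proof.
exists (\max_(k < n) \max_(m <- msupp (v k)) (mdeg m).+1) => k.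
apply: (bndW _ _ _ _ (bnd_poly_ex (v k))).
exact: (leq_bigmax_cond (F := fun k => \max_(m <- msupp (v k)) (mdeg m).+1)).
Qed.

Lemma bndV_seq (s : seq (Wn K n)) : exists D, forall v, v \in s -> bndV D v.
Proof.
elim: s => [|a s [D hD]]; first by exists 0%N.
have [Da hDa] := bndV_ex a.
exists (maxn Da D) => v; rewrite inE => /orP [/eqP ->|hv] k.
  by apply: (bndW _ _ _ _ (hDa k)); rewrite leq_maxl.
by apply: (bndW _ _ _ _ (hD v hv k)); rewrite leq_maxr.
Qed.

Lemma bndVW D E v : (D <= E)%N -> bndV D v -> bndV E v.
Proof. by move=> h hv k; apply: (bndW _ _ _ h (hv k)). Qed.

Lemma bndV_lin D m (c : 'I_m -> K) (w : 'I_m -> Wn K n) :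
  (forall i, bndV D (w i)) -> bndV D (\sum_(i < m) c i *: w i).
Proof.
move=> h k; rewrite sum_ffunE; apply: bnd_sum => i; rewrite ffunE.
by apply: bndZ; apply: h.
Qed.

Lemma span_bnd D S : (forall v, S v -> bndV D v) -> forall v, Defs.span S v -> bndV D v.
Proof. by move=> h v [m [c [w [hw ->]]]]; apply: bndV_lin => i; apply: h. Qed.

Lemma lie_bnd a b u v : bndV a u -> bndV b v -> bndV (a + b) (lie u v).
Proof.
move=> hu hv k; rewrite /lie ffunE; apply: bnd_sum => i.
apply: bndD; first by apply: bndM => //; apply: bnd_deriv.
by apply: bndN; rewrite addnC; apply: bndM => //; apply: bnd_deriv.
Qed.

Lemma lin_L L m (c : 'I_m -> K) (w : 'I_m -> Wn K n) :
  is_Lie_subalgebra L -> (forall i, L (w i)) -> L (\sum_(i < m) c i *: w i).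
Proof.
case=> h0 hD hZ _ hw; elim/big_rec: _ => [|i x _ hx] //.
by apply: hD => //; apply: hZ.
Qed.

Lemma span_L L S : is_Lie_subalgebra L -> (forall v, S v -> L v) -> forall v, Defs.span S v -> L v.
Proof. by move=> hL h v [m [c [w [hw ->]]]]; apply: lin_L => // i; apply: h. Qed.

Lemma Cpow_L L s j : is_Lie_subalgebra L -> (forall v, v \in s -> L v) ->
  forall v, Cpow s j v -> L v.
Proof.
move=> hL hs; elim: j => [|j IH] /=; first by apply: span_L.
apply: span_L => // x [a Ha [b Hb <-]].
have [_ _ _ hl] := hL; apply: hl; first exact: IH.
exact: (span_L _ _ hL hs _ Hb).
Qed.

Lemma Cpow_bnd s d j : (forall v, v \in s -> bndV d v) ->
  forall v, Cpow s j v -> bndV (j.+1 * d) v.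
Proof.
move=> hs; elim: j => [|j IH] /=; first by rewrite mul1n; apply: span_bnd.
apply: span_bnd => x [a Ha [b Hb <-]].
rewrite mulSn addnC; apply: lie_bnd; first exact: IH.
by move: Hb; apply: span_bnd.
Qed.

Lemma Csum_L L s k : is_Lie_subalgebra L -> (forall v, v \in s -> L v) ->
  forall v, Csum s k v -> L v.
Proof.
move=> hL hs; apply: span_L => // v [j _ hj]; exact: Cpow_L hj.
Qed.

Lemma Csum_bnd s d k : (forall v, v \in s -> bndV d v) ->
  forall v, Csum s k v -> bndV (k.+1 * d) v.
Proof.
move=> hs; apply: span_bnd => v [j hj hv].
apply: (bndVW _ _ _ _ (Cpow_bnd s d j hs v hv)); by rewrite leq_mul2r ltnS hj orbT.
Qed.
End Vf.

Section Div.
Context {K : fieldType} {n : nat}.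

Lemma div_x0 (i0 : 'I_n) (p : Pol K n) :
  (forall mm : multinom n, (mm i0 < 2)%N -> mcoeff mm p = 0) ->
  exists g, p = var K i0 ^+ 2 * g.
Proof.
move=> h.
pose e := mnm_muln (mnm1 i0) 2.
exists (\sum_(mm <- msupp p) mcoeff mm p *: mpolyX K (mnm_sub mm e)).
rewrite /var mpolyXn -/e mulr_sumr {1}(mpolyE p).
apply: eq_big_seq => mm hmm.
rewrite -scalerAr -mpolyXD; congr (_ *: mpolyX K _).
apply/mnmP => i; rewrite mnmDE mnmBE /e mulmnE mnm1E.
case: (eqVneq i0 i) => [<-|_]; last by rewrite mul0n add0n subn0.
rewrite mul1n subnKC //; rewrite leqNgt; apply/negP => hlt.
by move: hmm; rewrite mcoeff_msupp h // eqxx.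
Qed.
End Div.

Section Core.
Context {K : fieldType} {n' : nat}.
Local Notation N := n'.+1.
Local Notation TT D := ('I_N * ('I_2 * {ffun 'I_n' -> 'I_D}))%type.

Definition mon D (t : 'I_2 * {ffun 'I_n' -> 'I_D}) : multinom N :=
  Multinom [tuple (match unlift ord0 i with None => val t.1 | Some j => val (t.2 j) end) | i < N].

Lemma mon_surj D (mm : multinom N) : (mm ord0 < 2)%N -> (forall i, mm i < D)%N ->
  exists t, mm = mon D t.
Proof.
move=> h0 hD.
exists (Ordinal h0, [ffun j => Ordinal (hD (lift ord0 j))]).
apply/mnmP => i; rewrite /mon /= multinomE tnth_mktuple.
by case: unliftP => [j ->|->] /=; rewrite ?ffunE.
Qed.

Lemma coord_le_mdeg (mm : multinom N) i : (mm i <= mdeg mm)%N.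
Proof. by rewrite mdegE (bigD1 i) //= leq_addr. Qed.

Lemma core (L : set (Wn K N)) (M D m : nat) (w : 'I_m -> Wn K N) :
  is_Lie_subalgebra L ->
  (forall m' (u : 'I_m' -> Wn K N), (forall i, L20 ord0 L (u i)) -> lin_indep u -> (m' <= M)%N) ->
  (forall i, L (w i)) -> (forall i, bndV D (w i)) -> lin_indep w ->
  (m <= M + N * (2 * D ^ n'))%N.
Proof.
move=> hL hM hwL hwD hw.
pose A : 'M[K]_(m, #|{: TT D}|) :=
  \matrix_(i, j) mcoeff (mon D (enum_val j).2) (w i (enum_val j).1).
pose B := row_base (kermx A).
have hBA : B *m A = 0 by apply/sub_kermxP; rewrite eq_row_base.
have hBfree : row_free B by apply: row_base_free.
clearbody B.
pose u j := \sum_(i < m) B j i *: w i.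
have hr : (\rank (kermx A) <= M)%N.
  apply: (hM _ u).
  - move=> j; split; first exact: lin_L.
    move=> k; apply: div_x0 => mm hmm.
    rewrite /u sum_ffunE raddf_sum /=.
    under eq_bigr do rewrite ffunE mcoeffZ.
    case: (leqP D (mdeg mm)) => hdeg.
      by apply: big1 => i _; rewrite (hwD i k mm hdeg) mulr0.
    have hc : forall i, (mm i < D)%N.
      by move=> i; apply: leq_ltn_trans (coord_le_mdeg mm i) hdeg.
    have [t ->] := mon_surj D mm hmm hc.
    transitivity ((B *m A) j (enum_rank (k, t))); last by rewrite hBA mxE.
    by rewrite mxE; apply: eq_bigr => i _; rewrite mxE enum_rankK.
  - move=> c hc j.
    have hrow : (\row_j c j) *m B = 0.
      apply/rowP => i; rewrite !mxE.
      have -> : \sum_j (\row_j0 c j0) 0 j * B j i = \sum_j c j * B j i.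
        by apply: eq_bigr => j' _; rewrite mxE.
      apply: (hw (fun i => \sum_j c j * B j i)).
      rewrite -[RHS]hc /u.
      under eq_bigr do rewrite scaler_suml.
      rewrite exchange_big; apply: eq_bigr => j' _; rewrite scaler_sumr.
      by apply: eq_bigr => i' _; rewrite scalerA.
    have h0 : (\row_j c j : 'rV_(\rank (kermx A))) = 0.
      apply: (row_free_inj hBfree).
      by rewrite mul0mx.
    by have := congr1 (fun X : 'M[K]_(_, _) => X 0 j) h0; rewrite !mxE.
have hrk := mxrank_ker A.
have hcol := rank_leq_col A.
have hrow := rank_leq_row A.
have hT : #|{: TT D}| = (N * (2 * D ^ n'))%N by rewrite !card_prod card_ffun !card_ord.
rewrite -hT -(subnK hrow) -hrk.
by apply: leq_add.
Qed.
End Core.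

Section Dim.
Context {K : fieldType} {V : lmodType K}.
Implicit Types (S : set V).

Lemma dimE_ge0 S : (0 <= dimE S)%E.
Proof.
apply: ereal_sup_ubound; exists 0%N => //.
by exists (fun _ => 0); split; [case | move=> c _ []].
Qed.

Lemma dimE_le S (B : nat) :
  (forall m (w : 'I_m -> V), (forall i, S (w i)) -> lin_indep w -> (m <= B)%N) ->
  (dimE S <= ((B%:R : Rdefinitions.R))%:E)%E.
Proof.
move=> h; apply: ge_ereal_sup => _ [m [w [hw hi]] <-].
by rewrite lee_fin ler_nat; apply: (h m w).
Qed.

Lemma dimE_bound S : dimE S != +oo%E ->
  exists M, forall m (w : 'I_m -> V), (forall i, S (w i)) -> lin_indep w -> (m <= M)%N.
Proof.
move=> hne; have h0 := dimE_ge0 S.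
have hub : forall m (w : 'I_m -> V), (forall i, S (w i)) -> lin_indep w ->
    (((m%:R : Rdefinitions.R))%:E <= dimE S)%E.
  by move=> m w hw hi; apply: ereal_sup_ubound; exists m => //; exists w.
move: hne h0 hub; case: (dimE S) => [r| |] //= _.
rewrite lee_fin => hr hub.
exists (Num.Def.archi_bound r) => m w hw hi.
have := hub m w hw hi; rewrite lee_fin => hm.
have hlt := archi_boundP hr.
have : ((m%:R : Rdefinitions.R) < (Num.Def.archi_bound r)%:R) by apply: le_lt_trans hm hlt.
by rewrite ltr_nat => /ltnW.
Qed.
End Dim.

Section Esup.
Local Open Scope classical_set_scope.
Lemma limn_esup_le_ev (u : (\bar Rdefinitions.R)^nat) N0 a :
  (forall k, (N0 <= k)%N -> (u k <= a)%E) -> (limn_esup u <= a)%E.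
Proof.
move=> h; rewrite /limn_esup /limf_esup.
apply: (@le_trans _ _ (ereal_sup (u @` [set k : nat | (N0 <= k)%N]))).
  by apply: ereal_inf_lbound; exists [set k : nat | (N0 <= k)%N] => //; exists N0.
by apply: ge_ereal_sup => _ [k hk <-]; apply: h.
Qed.
End Esup.

Lemma leq_expr a b e : (a <= b)%N -> (a ^ e <= b ^ e)%N.
Proof. by move=> h; elim: e => // e IH; rewrite !expnS leq_mul. Qed.

Section Growth.
Context {K : fieldType} {n' : nat}.
Local Notation N := n'.+1.

Lemma growth_bound (L : set (Wn K N)) M (s : seq (Wn K N)) :
  is_Lie_subalgebra L ->
  (forall m' (u : 'I_m' -> Wn K N), (forall i, L20 ord0 L (u i)) -> lin_indep u -> (m' <= M)%N) ->
  (forall v, v \in s -> L v) ->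
  (growth s <= ((n'%:R + 2^-1 : Rdefinitions.R))%:E)%E.
Proof.
move=> hL hM hs.
have [d hd] := bndV_seq s.
pose C := (M + N * (2 * (2 * d) ^ n')).+1.
apply: (limn_esup_le_ev _ (maxn 2 (C ^ 2))) => k hk.
have hk2 : (2 <= k)%N by apply: leq_trans hk; rewrite leq_maxl.
have hkC : (C ^ 2 <= k)%N by apply: leq_trans hk; rewrite leq_maxr.
have hdim : forall m (w : 'I_m -> Wn K N), (forall i, Csum s k (w i)) -> lin_indep w ->
    (m <= C * k ^ n')%N.
  move=> m w hw hi.
  have := core L M (k.+1 * d) m w hL hM (fun i => Csum_L L s k hL hs _ (hw i))
    (fun i => Csum_bnd s d k hd _ (hw i)) hi.
  move=> hm; apply: leq_trans hm _.
  have hk0 : (0 < k)%N by apply: leq_trans hk2.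
  have hP : (1 <= k ^ n')%N by rewrite expn_gt0 hk0.
  have hX : ((k.+1 * d) ^ n' <= (2 * d) ^ n' * k ^ n')%N.
    rewrite -expnMn; apply: leq_expr.
    have hk21 : (k.+1 <= 2 * k)%N by lia.
    by rewrite mulnAC leq_mul2r hk21 orbT.
  rewrite /C.
  move: hX hP; set P := (k ^ n')%N; set Q := ((2 * d) ^ n')%N; set X := ((k.+1 * d) ^ n')%N.
  move=> hX hP.
  nia.
have hle := dimE_le _ _ hdim.
have h0 := dimE_ge0 (Csum s k).
move: hle h0; case: (dimE (Csum s k)) => [x| |] //=; rewrite !lee_fin => hx hx0.
have hkR : (1 < (k%:R : Rdefinitions.R)) by rewrite ltr1n.
have hlnk : 0 < ln (k%:R : Rdefinitions.R) by apply: ln_gt0.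
have hC1 : (1 <= C)%N by [].
have hCR : (1 <= (C%:R : Rdefinitions.R)) by rewrite ler1n.
have hlnC : 0 <= ln (C%:R : Rdefinitions.R) by apply: ln_ge0.
have hB : ln ((C * k ^ n')%:R : Rdefinitions.R) = ln (C%:R : Rdefinitions.R) + n'%:R * ln (k%:R : Rdefinitions.R).
  have hk0 : (0 < k)%N by apply: leq_trans hk2.
  rewrite natrM natrX lnM; last 2 first.
  - by rewrite posrE ltr0n.
  - by rewrite posrE exprn_gt0 // ltr0n.
  by rewrite lnXn ?ltr0n // mulr_natl.
have hlnx : ln x <= ln (C%:R : Rdefinitions.R) + n'%:R * ln (k%:R : Rdefinitions.R).
  rewrite -hB.
  have [hx1|hx1] := leP x 0.
    apply: le_trans (ln_le0 _) _; first by apply: le_trans hx1 _.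
    by rewrite hB addr_ge0 // mulr_ge0 // ltW.
  rewrite ler_ln // posrE; apply: lt_le_trans hx1 hx.
have h2C : 2 * ln (C%:R : Rdefinitions.R) <= ln (k%:R : Rdefinitions.R).
  rewrite -[2]/(2%:R) mulr_natl -lnXn; last by apply: lt_le_trans hCR.
  rewrite -natrX ler_ln ?posrE ?ltr0n ?expn_gt0 ?ler_nat //.
  by apply: leq_trans hk2.
rewrite ler_pdivrMr //.
nra.
Qed.
End Growth.

Theorem mainTheorem18 (K : fieldType) (hK : [pchar K] =i pred0)
    (n : nat) (hn : (0 < n)%N) (L : set (Wn K n)) :
  is_Lie_subalgebra L ->
  GKdim L = ((n%:R : Rdefinitions.R))%:E ->
  dimE (L20 (Ordinal hn) L) = +oo%E.
Proof.
move=> hL hGK.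
case: (eqVneq (dimE (L20 (Ordinal hn) L)) +oo%E) => // hne; exfalso.
have [M hM] := dimE_bound _ hne.
move: hn L hL hGK hne hM; case: n => [//|n'] hn L hL hGK _ hM.
have e0 : Ordinal hn = ord0 by apply: val_inj.
rewrite e0 in hM.
have hG : (GKdim L <= ((n'%:R + 2^-1 : Rdefinitions.R))%:E)%E.
  by apply: ge_ereal_sup => _ [s hs <-]; exact: (growth_bound L M s hL hM hs).
move: hG; rewrite hGK lee_fin -[n'.+1]addn1 natrD => h.
move: h; clear; move=> h; lra.
Qed.
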